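(* Let $m>0$, $n\in\mathbb{R}$, and let $b:\mathbb{R}\to\mathbb{R}$ be periodic with period $m$ and Riemann-integrable on every bounded interval. If $u\in\mathbb{R}$ satisfies $\int_u^{u+m}b(x)\,dx\le n$, then there exists $x_1\in[u,u+m]$ such that for all $x_2\in[x_1,x_1+m]$, $$\int_{x_1}^{x_2}b(x)\,dx\le (x_2-x_1)\cdot\frac{n}{m}.$$ *)

(* Defs.v *)
From Stdlib Require Import Reals.
Open Scope R_scope.

Definition Rint (f : R -> R) (hf : forall a b : R, Riemann_integrable f a b)
  (a b : R) : R := RiemannInt (hf a b).

(* Main.v *)
Require Import Defs.
From Stdlib Require Import Reals Lra.
From Coquelicot Require Import Coquelicot.
Open Scope R_scope.

Definition IR (b : R -> R) (a c : R) : R := RInt b a c.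

Theorem mainTheorem14 (m n : R) (b : R -> R)
  (hm : 0 < m)
  (hper : forall x : R, b (x + m) = b x)
  (hint : forall c d : R, Riemann_integrable b c d)
  (u : R)
  (hu : Rint b hint u (u + m) <= n) :
  exists x1 : R, u <= x1 <= u + m /\
    forall x2 : R, x1 <= x2 <= x1 + m ->
      Rint b hint x1 x2 <= (x2 - x1) * (n / m).
Proof.
  assert (E : forall c d, Rint b hint c d = RInt b c d).
  { intros c d; unfold Rint; rewrite (RInt_Reals b c d (hint c d)); reflexivity. }
  assert (EX : forall c d, ex_RInt b c d) by (intros; apply ex_RInt_Reals_1, hint).
  assert (CH : forall a c d, RInt b a c + RInt b c d = RInt b a d).
  { intros a c d. apply (RInt_Chasles b a c d); auto. }
  assert (SH : forall a c, RInt b (a + m) (c + m) = RInt b a c).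
  { intros a c.
    pose proof (RInt_comp_lin b 1 m a c) as H.
    replace (1 * a + m) with (a + m) in H by ring.
    replace (1 * c + m) with (c + m) in H by ring.
    rewrite <- H by auto.
    apply RInt_ext. intros x _. unfold scal; simpl; unfold mult; simpl. rewrite !Rmult_1_l, hper. reflexivity.
    }
  assert (PER : forall x, RInt b x (x + m) = RInt b u (u + m)).
  { intros x. rewrite <- (CH x (u+m) (x+m)), <- (CH u x (u+m)), SH. apply Rplus_comm. }
  assert (CH' : forall a c d, IR b a c + IR b c d = IR b a d) by exact CH.
  assert (PER' : forall x, IR b x (x + m) = IR b u (u + m)) by exact PER.
  assert (E' : forall c d, Rint b hint c d = IR b c d) by exact E.
  clear CH PER E SH.
  set (c := n / m).
  assert (Hmc : m * c = n) by (unfold c; field; lra).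
  set (G := fun x => IR b u x - (x - u) * c).
  assert (CG : forall x, continuity_pt G x).
  { intros x. unfold G, IR. apply continuity_pt_minus.
    - apply continuity_pt_filterlim.
      apply (@continuous_RInt_1 R_NormedModule b u x (fun z => RInt b u z)).
      apply filter_forall. intros z. exact (@RInt_correct R_CompleteNormedModule b u z (EX u z)).
    - apply continuity_pt_mult. apply continuity_pt_minus.
      apply continuity_pt_id. apply continuity_pt_const. intros ? ?; auto.
      apply continuity_pt_const. intros ? ?; auto. }
  destruct (continuity_ab_maj G u (u + m)) as [x1 [Hmax Hx1]]; [lra| intros; apply CG |].
  exists x1. split; [exact Hx1|].
  intros x2 Hx2. rewrite E'. fold c.
  assert (D : IR b x1 x2 = IR b u x2 - IR b u x1)
    by (rewrite <- (CH' u x1 x2); ring).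
  rewrite D.
  assert (Hu' : IR b u (u + m) <= n) by (rewrite <- E'; exact hu).
  destruct (Rle_dec x2 (u + m)) as [Hle|Hgt].
  - pose proof (Hmax x2 ltac:(lra)) as H. unfold G in H. nra.
  - set (y := x2 - m).
    pose proof (Hmax y ltac:(unfold y; lra)) as H. unfold G in H.
    assert (Hy : IR b u x2 = IR b u y + IR b u (u + m)).
    { rewrite <- (PER' y). replace x2 with (y + m) by (unfold y; ring).
      rewrite CH'. reflexivity. }
    rewrite Hy. unfold y in *. nra.
Qed.
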